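(* Let $\gamma_k=\frac{\gamma_0}{(k+1)^a}$ and $\lambda_k=\frac{\lambda_0}{(k+1)^b}$ for $k\ge0$, where $a,b,\gamma_0,\lambda_0$ are positive scalars with $\gamma_0\lambda_0\le 2m/\mu_h$, and let $r<1$. Let $\{x_k\}$ and $\{\bar x_N\}$ be generated by the IR-IG method with these sequences and averaging parameter $r$. If $a>b$, $a>0.5$, $a+b<1$ and $ar\le1$, then $\bar x_N\to x_h^*$ as $N\to\infty$.
   Context: Standing setup: $X\subset\mathbb{R}^n$ is nonempty, compact and convex. $f_1,\dots,f_m:\mathbb{R}^n\to\mathbb{R}$ are convex (possibly nondifferentiable) functions and $f=\sum_{i=1}^m f_i$. $h:\mathbb{R}^n\to\mathbb{R}$ is strongly convex with parameter $\mu_h>0$ (possibly nondifferentiable). Let $X^*=\arg\min_{x\in X}f(x)$ and let $x_h^*$ be the unique minimizer of $h$ over $X^*$. $\mathcal{P}_X$ denotes Euclidean projection onto $X$. IR-IG method: given $x_0\in X$, positive sequences $\{\gamma_k\}$, $\{\lambda_k\}$ and a constant $r<1$, for each $k\ge0$ set $x_{k,0}=x_k$; for $i=0,\dots,m-1$ pick any $g_{f_{i+1}}(x_{k,i})\in\partial f_{i+1}(x_{k,i})$ and $g_h(x_{k,i})\in\partial h(x_{k,i})$ and set $x_{k,i+1}=\mathcal{P}_X\big(x_{k,i}-\gamma_k\big(g_{f_{i+1}}(x_{k,i})+\tfrac{\lambda_k}{m}g_h(x_{k,i})\big)\big)$; then set $x_{k+1}=x_{k,m}$. The averaged iterates are $\bar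 x_N=\sum_{k=0}^{N-1}\gamma_k^r x_k\big/\sum_{k=0}^{N-1}\gamma_k^r$ for $N\ge1$. *)

(* Defs.v *)
From Stdlib Require Import Reals.
From mathcomp Require Import ssreflect ssrfun ssrbool eqtype ssrnat seq fintype bigop.

Set Implicit Arguments.
Unset Strict Implicit.

Open Scope R_scope.

Definition vec (n : nat) := 'I_n -> R.

Definition vadd n (u v : vec n) : vec n := fun j => u j + v j.
Definition vsub n (u v : vec n) : vec n := fun j => u j - v j.
Definition vscale n (c : R) (u : vec n) : vec n := fun j => c * u j.

Definition dot n (u v : vec n) : R := \big[Rplus/0]_(j < n) (u j * v j).
Definition norm n (u : vec n) : R := sqrt (dot u u).

Definition comb n (t : R) (x y : vec n) : vec n :=
  vadd (vscale t x) (vscale (1 - t) y).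

Definition convex_set n (X : vec n -> Prop) : Prop :=
  forall x y t, X x -> X y -> 0 <= t <= 1 -> X (comb t x y).

Definition seq_conv n (u : nat -> vec n) (l : vec n) : Prop :=
  forall eps, eps > 0 -> exists N, forall k, (N <= k)%nat -> norm (vsub (u k) l) < eps.

Definition compact_set n (X : vec n -> Prop) : Prop :=
  forall u : nat -> vec n, (forall k, X (u k)) ->
  exists (phi : nat -> nat) (l : vec n),
    (forall k, (phi k < phi (S k))%nat) /\ X l /\ seq_conv (fun k => u (phi k)) l.

Definition convex_fun n (f : vec n -> R) : Prop :=
  forall x y t, 0 <= t <= 1 -> f (comb t x y) <= t * f x + (1 - t) * f y.

Definition strongly_convex n (mu : R) (f : vec n -> R) : Prop :=
  forall x y t, 0 <= t <= 1 ->
    f (comb t x y) <= t * f x + (1 - t) * f y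
                      - mu / 2 * t * (1 - t) * (norm (vsub x y))^2.

Definition subgrad n (f : vec n -> R) (x g : vec n) : Prop :=
  forall y, f y >= f x + dot g (vsub y x).

Definition is_proj n (X : vec n -> Prop) (y p : vec n) : Prop :=
  X p /\ forall z, X z -> norm (vsub p y) <= norm (vsub z y).

(* f = sum_{i<m} fs i  (fs i plays the role of f_{i+1}). *)
Definition fsum n (m : nat) (fs : nat -> vec n -> R) (x : vec n) : R :=
  \big[Rplus/0]_(i < m) fs i x.

Definition argmin n (f : vec n -> R) (X : vec n -> Prop) (x : vec n) : Prop :=
  X x /\ forall y, X y -> f x <= f y.

Definition wavg n (w : nat -> R) (xs : nat -> vec n) (N : nat) : vec n :=
  fun j => (\big[Rplus/0]_(k < N) (w k * xs k j)) / (\big[Rplus/0]_(k < N) w k).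

(* Main.v *)
Require Import Defs.
From Stdlib Require Import Reals Lra Psatz ClassicalEpsilon FunctionalExtensionality Classical.
From HB Require Import structures.
From mathcomp Require Import ssreflect ssrfun ssrbool eqtype ssrnat seq fintype bigop div.
From mathcomp Require Import zify.
Set Warnings "-notation-overridden".
Set Implicit Arguments.
Unset Strict Implicit.
Open Scope R_scope.
HB.instance Definition _ := Monoid.isComLaw.Build R 0 Rplus (fun x y z => esym (Rplus_assoc x y z)) Rplus_comm Rplus_0_l.

Section Vec.
Variable n : nat.
Implicit Types u v w : vec n.

Definition nsq u := dot u u.

Lemma sumR_scale (c : R) (F : 'I_n -> R) :
  \big[Rplus/0]_(j<n) (c * F j) = c * \big[Rplus/0]_(j<n) F j.
Proof.
symmetry; apply: (big_morph (fun x => c * x)).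
- by move=> x y; rewrite Rmult_plus_distr_l.
- by rewrite Rmult_0_r.
Qed.

Lemma sumR_opp (F : 'I_n -> R) :
  \big[Rplus/0]_(j<n) (- F j) = - \big[Rplus/0]_(j<n) F j.
Proof.
symmetry; apply: (big_morph Ropp).
- by move=> x y; rewrite Ropp_plus_distr.
- by rewrite Ropp_0.
Qed.

Lemma sumR_le (F G : 'I_n -> R) : (forall j, F j <= G j) ->
  \big[Rplus/0]_(j<n) F j <= \big[Rplus/0]_(j<n) G j.
Proof.
move=> H; apply: (big_ind2 (fun x y => x <= y)); first lra.
- move=> ? ? ? ? ? ?; lra.
- by move=> j _; apply H.
Qed.

Lemma sumR_ge0 (F : 'I_n -> R) : (forall j, 0 <= F j) ->
  0 <= \big[Rplus/0]_(j<n) F j.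
Proof.
move=> H; apply: (big_ind (fun x => 0 <= x)); first lra.
- move=> ? ? ? ?; lra.
- by move=> j _; apply H.
Qed.

Lemma sumR_ext (F G : 'I_n -> R) : (forall j, F j = G j) ->
  \big[Rplus/0]_(j<n) F j = \big[Rplus/0]_(j<n) G j.
Proof. by move=> H; apply: eq_bigr => j _; apply H. Qed.

Lemma dot_sym u v : dot u v = dot v u.
Proof. apply: sumR_ext => j; apply Rmult_comm. Qed.

Lemma dot_addl u v w : dot (vadd u v) w = dot u w + dot v w.
Proof. rewrite /dot -big_split; apply: sumR_ext => j; rewrite /vadd /=; ring. Qed.

Lemma dot_scalel c u w : dot (vscale c u) w = c * dot u w.
Proof. rewrite /dot -sumR_scale; apply: sumR_ext => j; rewrite /vscale /=; ring. Qed.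

Lemma dot_subl u v w : dot (vsub u v) w = dot u w - dot v w.
Proof.
rewrite /dot /Rminus -sumR_opp -big_split; apply: sumR_ext => j; rewrite /vsub /=; ring.
Qed.

Lemma dot_addr u v w : dot w (vadd u v) = dot w u + dot w v.
Proof. by rewrite dot_sym dot_addl !(dot_sym w). Qed.
Lemma dot_subr u v w : dot w (vsub u v) = dot w u - dot w v.
Proof. by rewrite dot_sym dot_subl !(dot_sym w). Qed.
Lemma dot_scaler c u w : dot w (vscale c u) = c * dot w u.
Proof. by rewrite dot_sym dot_scalel !(dot_sym w). Qed.

Lemma nsq_ge0 u : 0 <= nsq u.
Proof. apply: sumR_ge0 => j; nra. Qed.

Lemma nsq_sub u v : nsq (vsub u v) = nsq u - 2 * dot u v + nsq v.
Proof. rewrite /nsq !dot_subl !dot_subr (dot_sym v u); ring. Qed.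

Lemma nsq_add u v : nsq (vadd u v) = nsq u + 2 * dot u v + nsq v.
Proof. rewrite /nsq !dot_addl !dot_addr (dot_sym v u); ring. Qed.

Lemma nsq_scale c u : nsq (vscale c u) = c^2 * nsq u.
Proof. rewrite /nsq dot_scalel dot_scaler; ring. Qed.

Lemma young u v t : 0 < t -> 2 * dot u v <= t * nsq u + nsq v / t.
Proof.
move=> Ht.
have H := nsq_ge0 (vsub (vscale t u) v).
rewrite nsq_sub nsq_scale dot_scalel in H.
have -> : nsq v / t = nsq v * / t by [].
have Hi : 0 < / t by apply Rinv_0_lt_compat.
have : 0 <= (t ^ 2 * nsq u - 2 * (t * dot u v) + nsq v) * / t by nra.
have -> : (t ^ 2 * nsq u - 2 * (t * dot u v) + nsq v) * / t
   = t * nsq u - 2 * dot u v + nsq v * / t by field; lra.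
lra.
Qed.

Lemma nsq_add_le u v t : 0 < t -> nsq (vadd u v) <= (1 + t) * nsq u + (1 + / t) * nsq v.
Proof. move=> Ht; rewrite nsq_add; have := young u v Ht; rewrite /Rdiv; lra. Qed.

Lemma comp_sq_le u (j : 'I_n) : (u j)^2 <= nsq u.
Proof.
rewrite /nsq /dot (bigD1 j) //=.
match goal with |- _ <= _ + ?S => have : 0 <= S end.
  apply: (big_ind (fun x => 0 <= x)); first lra.
  - move=> ? ? ? ?; lra.
  - move=> i _; nra.
rewrite Rmult_1_r; lra.
Qed.

Lemma norm_sq u : norm u ^ 2 = nsq u.
Proof. rewrite /norm /= Rmult_1_r sqrt_sqrt //; apply nsq_ge0. Qed.

Lemma norm_ge0 u : 0 <= norm u.
Proof. apply sqrt_pos. Qed.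

Lemma comp_le_norm u (j : 'I_n) : Rabs (u j) <= norm u.
Proof.
have H := comp_sq_le u j.
rewrite /norm; rewrite -(sqrt_Rsqr_abs (u j)); apply sqrt_le_1_alt.
rewrite /Rsqr; simpl in H; rewrite Rmult_1_r /nsq in H; lra.
Qed.

Lemma norm_le_iff u v : norm u <= norm v <-> nsq u <= nsq v.
Proof.
split=> H.
- rewrite -!norm_sq; have := norm_ge0 u; have := norm_ge0 v; nra.
- rewrite /norm; apply sqrt_le_1_alt; exact H.
Qed.

Lemma nsq_lt_norm u e : 0 < e -> nsq u < e^2 -> norm u < e.
Proof.
move=> He H; have := norm_ge0 u; rewrite -norm_sq in H; nra.
Qed.

Lemma nsq0_eq u v : nsq (vsub u v) <= 0 -> u = v.
Proof.
move=> H; apply: functional_extensionality => j.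
have H1 := comp_sq_le (vsub u v) j; have H2 := nsq_ge0 (vsub u v).
have : (vsub u v j)^2 <= 0 by lra.
rewrite /vsub /= Rmult_1_r => H3; nra.
Qed.

Lemma nsq_le_box u R0 : (forall j, Rabs (u j) <= R0) -> nsq u <= INR n * R0^2.
Proof.
move=> H; rewrite /nsq /dot.
have -> : INR n * R0 ^ 2 = \big[Rplus/0]_(j<n) (R0^2).
  rewrite big_const_ord; elim: n {u H} => [|k IH]; first by rewrite /=; ring.
  rewrite iterS -IH S_INR; ring.
apply sumR_le => j; have := H j; have := Rabs_pos (u j).
move=> ? ?; have : u j * u j = Rabs (u j) * Rabs (u j).
  by rewrite -Rabs_mult Rabs_right //; nra.
move=> ->; nra.
Qed.

End Vec.

Lemma divle1 a d : 0 < d -> 0 <= a <= d -> 0 <= a / d <= 1.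
Proof.
move=> Hd [H1 H2]; have Hi := Rinv_0_lt_compat d Hd; split; rewrite /Rdiv; first nra.
have: a * /d <= d * /d by nra.
rewrite Rinv_r; lra.
Qed.

Section Box.
Variable n : nat.

Definition upd (w : vec n) (k : nat) (c : R) : vec n :=
  fun j => if (nat_of_ord j == k) then c else w j.

Lemma box_bound (f : vec n -> R) (R0 : R) : convex_fun f -> 0 < R0 ->
  forall k, (k <= n)%nat -> forall p : vec n, exists M, forall w : vec n,
   (forall j : 'I_n, (j < k)%nat -> Rabs (w j - p j) <= R0) ->
   (forall j : 'I_n, (k <= j)%nat -> w j = p j) -> f w <= M.
Proof.
move=> Hf HR; elim=> [|k IH] Hk p.
  exists (f p) => w _ H2.
  have -> : w = p by apply: functional_extensionality => j; apply H2.
  lra.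
have Hkn : (k < n)%nat by [].
set o := Ordinal Hkn.
have [M1 HM1] := IH (ltnW Hkn) (upd p k (p o - R0)).
have [M2 HM2] := IH (ltnW Hkn) (upd p k (p o + R0)).
exists (Rmax M1 M2) => w H1 H2.
set t := (p o + R0 - w o) / (2 * R0).
have Hwo : Rabs (w o - p o) <= R0 by apply H1 => /=.
have Ht : 0 <= t <= 1.
  have := Rle_abs (w o - p o); have := Rle_abs (-(w o - p o)); rewrite Rabs_Ropp.
  move=> ? ?; apply divle1; lra.
have Hw : w = comb t (upd w k (p o - R0)) (upd w k (p o + R0)).
  apply: functional_extensionality => j.
  rewrite /comb /vadd /vscale /upd.
  case: eqP => Hj.
  - have -> : j = o by apply: val_inj.
    rewrite /t; field; lra.
  - ring.
have E1 : f (upd w k (p o - R0)) <= M1.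
  apply HM1.
  - move=> j Hj; rewrite /upd; have -> : (nat_of_ord j == k) = false.
      by apply/eqP => E; rewrite E ltnn in Hj.
    by apply H1; apply: ltn_trans Hj _.
  - move=> j Hj; rewrite /upd; case: eqP => E //.
    apply H2; rewrite ltn_neqAle Hj andbT; apply/eqP => E'; by apply E.
have E2 : f (upd w k (p o + R0)) <= M2.
  apply HM2.
  - move=> j Hj; rewrite /upd; have -> : (nat_of_ord j == k) = false.
      by apply/eqP => E; rewrite E ltnn in Hj.
    by apply H1; apply: ltn_trans Hj _.
  - move=> j Hj; rewrite /upd; case: eqP => E //.
    apply H2; rewrite ltn_neqAle Hj andbT; apply/eqP => E'; by apply E.
rewrite Hw; apply: Rle_trans; first by apply Hf.
have := Rmax_l M1 M2; have := Rmax_r M1 M2; nra.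
Qed.

Lemma box_bound_full (f : vec n -> R) (R0 : R) : convex_fun f -> 0 < R0 ->
  forall p : vec n, exists M, forall w : vec n,
   (forall j : 'I_n, Rabs (w j - p j) <= R0) -> f w <= M.
Proof.
move=> Hf HR p; have [M HM] := box_bound Hf HR (leqnn n) p.
exists M => w H; apply HM.
- move=> j _; apply H.
- move=> j Hj; exfalso; have := ltn_ord j; by rewrite ltnNge Hj.
Qed.

End Box.

Definition Sum (f : nat -> R) (N : nat) : R := \big[Rplus/0]_(k < N) f k.

Lemma Sum_0 f : Sum f 0 = 0.
Proof. by rewrite /Sum big_ord0. Qed.

Lemma Sum_S f N : Sum f (S N) = Sum f N + f N.
Proof. by rewrite /Sum big_ord_recr /=. Qed.

Lemma Sum_ext f g N : (forall k, (k < N)%nat -> f k = g k) -> Sum f N = Sum g N.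
Proof.
elim: N => [|N IH] H; first by rewrite !Sum_0.
rewrite !Sum_S IH ?H //; move=> k Hk; apply H; apply: ltn_trans Hk _; done.
Qed.

Lemma Sum_le f g N : (forall k, (k < N)%nat -> f k <= g k) -> Sum f N <= Sum g N.
Proof.
elim: N => [|N IH] H; first by rewrite !Sum_0; lra.
rewrite !Sum_S; have := H N (ltnSn N); have : Sum f N <= Sum g N.
  apply IH => k Hk; apply H; apply: ltn_trans Hk _; done.
lra.
Qed.

Lemma Sum_ge0 f N : (forall k, (k < N)%nat -> 0 <= f k) -> 0 <= Sum f N.
Proof.
move=> H; have := @Sum_le (fun _ => 0) f N H.
have -> : Sum (fun _ => 0) N = 0; last by [].
by elim: N {H} => [|N IH]; rewrite ?Sum_0 ?Sum_S ?IH //; ring.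
Qed.

Lemma Sum_plus f g N : Sum (fun k => f k + g k) N = Sum f N + Sum g N.
Proof. elim: N => [|N IH]; rewrite ?Sum_0 ?Sum_S ?IH; ring. Qed.

Lemma Sum_scale c f N : Sum (fun k => c * f k) N = c * Sum f N.
Proof. elim: N => [|N IH]; rewrite ?Sum_0 ?Sum_S ?IH; ring. Qed.

Lemma Sum_pos f N : (forall k, 0 < f k) -> 0 < Sum f (S N).
Proof.
move=> H; rewrite Sum_S; have := @Sum_ge0 f N (fun k _ => Rlt_le _ _ (H k)).
have := H N; lra.
Qed.

Section Anal.
Variable n : nat.

Lemma X_bounded (X : vec n -> Prop) (x0 : vec n) : compact_set X -> X x0 ->
  exists R0, 0 < R0 /\ forall x, X x -> forall j, Rabs (x j - x0 j) <= R0.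
Proof.
move=> HC HX0; apply: NNPP => Hn.
have H : forall k : nat, exists x, X x /\ exists j, Rabs (x j - x0 j) > INR k + 1.
  move=> k; apply: NNPP => Hk; apply Hn; exists (INR k + 1); split.
    have := pos_INR k; lra.
  move=> x Hx j; apply: Rnot_lt_le => Hl; apply Hk; exists x; split=> //; by exists j.
pose u k := proj1_sig (constructive_indefinite_description _ (H k)).
have Hu : forall k, X (u k) /\ exists j, Rabs (u k j - x0 j) > INR k + 1.
  move=> k; exact: (proj2_sig (constructive_indefinite_description _ (H k))).
have [phi [l [Hphi [Hl Hcv]]]] := HC u (fun k => proj1 (Hu k)).
have [N HN] := Hcv 1 Rlt_0_1.
have [K HK] := INR_archimed 1 (1 + norm (vsub l x0)) Rlt_0_1.
have Hge : forall k, (k <= phi k)%nat.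
  elim=> [|k IH] //; apply: leq_ltn_trans IH (Hphi k).
set k := maxn N K.
have H1 := HN k (leq_maxl N K).
have [_ [j Hj]] := Hu (phi k).
have Hkk : (K <= phi k)%nat by apply: leq_trans (leq_maxr N K) (Hge k).
have : INR K <= INR (phi k) by apply le_INR; apply/leP.
move=> A3.
have A2 : Rabs (u (phi k) j - l j) <= norm (vsub (u (phi k)) l) := comp_le_norm (vsub (u (phi k)) l) j.
have A1 : Rabs (l j - x0 j) <= norm (vsub l x0) := comp_le_norm (vsub l x0) j.
have := Rabs_triang (u (phi k) j - l j) (l j - x0 j).
have -> : u (phi k) j - l j + (l j - x0 j) = u (phi k) j - x0 j by ring.
lra.
Qed.

Lemma lower_bound (F : vec n -> R) (X : vec n -> Prop) x0 g0 D :
  subgrad F x0 g0 -> (forall y, X y -> nsq (vsub y x0) <= D) ->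
  exists L, forall y, X y -> L <= F y.
Proof.
move=> Hg HB; exists (F x0 - (nsq g0 + D) / 2) => y Hy.
have := Hg y; have := nsq_ge0 (vadd g0 (vsub y x0)); rewrite nsq_add.
have := HB y Hy.
rewrite /nsq; lra.
Qed.

Lemma subgrad_bound (F : vec n -> R) (X : vec n -> Prop) x0 R0 M L :
  (forall x, X x -> forall j, Rabs (x j - x0 j) <= R0) ->
  (forall w, (forall j, Rabs (w j - x0 j) <= R0 + 1) -> F w <= M) ->
  (forall y, X y -> L <= F y) ->
  forall x g, X x -> subgrad F x g -> nsq g <= (M - L)^2.
Proof.
move=> HB HM HL x g Hx Hg.
have Hn0 := norm_ge0 g.
case: (Req_dec (norm g) 0) => Hz.
  rewrite -norm_sq Hz; have := pow2_ge_0 (M - L); simpl; lra.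
have Hpos : 0 < norm g by lra.
set s := / norm g.
set w := vadd x (vscale s g).
have Hw : forall j, Rabs (w j - x0 j) <= R0 + 1.
  move=> j; rewrite /w /vadd /vscale.
  have -> : x j + s * g j - x0 j = (x j - x0 j) + s * g j by ring.
  apply: Rle_trans; first apply Rabs_triang.
  have E : Rabs (s * g j) = s * Rabs (g j).
    rewrite Rabs_mult (Rabs_right s) //; left; apply Rinv_0_lt_compat; lra.
  rewrite E; have := HB x Hx j; have := comp_le_norm g j.
  move=> A1 A2.
  have : s * Rabs (g j) <= s * norm g.
    apply Rmult_le_compat_l => //; left; apply Rinv_0_lt_compat; lra.
  rewrite /s Rinv_l //; lra.
have := Hg w; have := HM w Hw; have := HL x Hx.
have -> : dot g (vsub w x) = norm g.
  rewrite /w dot_subr dot_addr dot_scaler.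
  have -> : dot g g = norm g ^2 by rewrite norm_sq.
  rewrite /s; field; lra.
move=> ? ? ?.
have : norm g <= M - L by lra.
rewrite -norm_sq; nra.
Qed.

Lemma lsc_bound (F : vec n -> R) z : convex_fun F ->
  exists M, forall d w, 0 < d -> (forall j, Rabs (w j - z j) <= d) ->
    (1 + d) * F z <= F w + d * M.
Proof.
move=> Hf; have [M HM] := box_bound_full Hf Rlt_0_1 z.
exists M => d w Hd Hw.
set v := vsub z (vscale (/ d) (vsub w z)).
have Hv : F v <= M.
  apply HM => j; rewrite /v /vsub /vscale.
  have -> : z j - / d * (w j - z j) - z j = - (/ d * (w j - z j)) by ring.
  have Hi := Rinv_0_lt_compat d Hd.
  have E : Rabs (/ d * (w j - z j)) = / d * Rabs (w j - z j).
    rewrite Rabs_mult (Rabs_right (/ d)) //; lra.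
  rewrite Rabs_Ropp E; have A := Hw j.
  have : / d * Rabs (w j - z j) <= / d * d by apply Rmult_le_compat_l; lra.
  rewrite Rinv_l; lra.
have Hz : z = comb (/ (1 + d)) w v.
  apply: functional_extensionality => j; rewrite /comb /vadd /vscale /v /vsub /vscale.
  field; lra.
have Ht : 0 <= / (1 + d) <= 1.
  have := divle1 (a := 1) (d := 1 + d); rewrite /Rdiv Rmult_1_l; move=> H; apply H; lra.
have := Hf w v _ Ht; rewrite -Hz => H.
have E : (1 + d) * (/ (1 + d) * F w + (1 - / (1 + d)) * F v) = F w + d * F v.
  field; lra.
have : (1 + d) * F z <= (1 + d) * (/ (1 + d) * F w + (1 - / (1 + d)) * F v).
  apply Rmult_le_compat_l; lra.
nra.
Qed.

Lemma jensen (X : vec n -> Prop) (F : vec n -> R) (w : nat -> R) (xs : nat -> vec n) :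
  convex_set X -> convex_fun F -> (forall k, X (xs k)) -> (forall k, 0 < w k) ->
  forall N, X (wavg w xs (S N)) /\
     F (wavg w xs (S N)) * Sum w (S N) <= Sum (fun k => w k * F (xs k)) (S N).
Proof.
move=> HX HF Hxs Hw; elim=> [|N [IH1 IH2]].
  have E : wavg w xs 1 = xs 0%nat.
    apply: functional_extensionality => j.
    rewrite /wavg -/(Sum (fun k => w k * xs k j) 1) -/(Sum w 1) !Sum_S !Sum_0.
    have := Hw 0%nat; move=> ?; field; lra.
  rewrite E Sum_S Sum_0 Sum_S Sum_0; split=> //; lra.
have HS := Sum_pos N Hw.
have HS2 := Sum_pos (S N) Hw.
set t := Sum w (S N) / Sum w (S (S N)).
have Ht : 0 <= t <= 1.
  apply divle1; first exact HS2.
  split; first lra.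
  rewrite (Sum_S w (S N)); have := Hw (S N); lra.
have E : wavg w xs (S (S N)) = comb t (wavg w xs (S N)) (xs (S N)).
  apply: functional_extensionality => j.
  rewrite /comb /vadd /vscale /wavg /t.
  rewrite -!/(Sum (fun k => w k * xs k j) _) -!/(Sum w _).
  rewrite (Sum_S (fun k => w k * xs k j) (S N)) (Sum_S w (S N)).
  rewrite Sum_S in HS2.
  field; lra.
rewrite E; split; first by apply HX.
have H := HF (wavg w xs (S N)) (xs (S N)) t Ht.
rewrite (Sum_S (fun k => w k * F (xs k)) (S N)).
have Et : t * Sum w (S (S N)) = Sum w (S N).
  rewrite /t; field; lra.
have Et2 : (1 - t) * Sum w (S (S N)) = w (S N).
  rewrite /t (Sum_S w (S N)); rewrite (Sum_S w (S N)) in HS2; field; lra.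
have H3 : F (comb t (wavg w xs (S N)) (xs (S N))) * Sum w (S (S N)) <=
  (t * F (wavg w xs (S N)) + (1 - t) * F (xs (S N))) * Sum w (S (S N)).
  apply Rmult_le_compat_r; lra.
have E3 : (t * F (wavg w xs (S N)) + (1 - t) * F (xs (S N))) * Sum w (S (S N)) =
  F (wavg w xs (S N)) * (t * Sum w (S (S N))) + F (xs (S N)) * ((1 - t) * Sum w (S (S N))) by ring.
rewrite E3 Et Et2 in H3.
lra.
Qed.

End Anal.

Section Proj.
Variable n : nat.

Lemma nsq_sub_sym (u v : vec n) : nsq (vsub u v) = nsq (vsub v u).
Proof. rewrite !nsq_sub (dot_sym v u); ring. Qed.

Lemma proj_nonexp (X : vec n -> Prop) y p z : convex_set X -> is_proj X y p -> X z ->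
  nsq (vsub p z) <= nsq (vsub y z).
Proof.
move=> HX [Hp Hmin] Hz.
set dl := dot (vsub p y) (vsub z p).
have Hineq : forall t, 0 < t <= 1 -> 0 <= 2 * dl + t * nsq (vsub z p).
  move=> t Ht.
  have Hq : X (comb t z p) by apply HX => //; lra.
  have := Hmin _ Hq; rewrite norm_le_iff.
  have -> : vsub (comb t z p) y = vadd (vsub p y) (vscale t (vsub z p)).
    apply: functional_extensionality => j; rewrite /comb /vsub /vadd /vscale; ring.
  rewrite nsq_add nsq_scale dot_scaler -/dl => H.
  have : 0 <= t * (2 * dl + t * nsq (vsub z p)) by simpl in H; nra.
  move=> H2; apply: (Rmult_le_reg_l t); lra.
have Hdl : 0 <= dl.
  apply: Rnot_lt_le => Hneg.
  have Hns := nsq_ge0 (vsub z p).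
  case: (Rle_lt_dec (nsq (vsub z p)) 0) => Hc.
    have := Hineq 1 (conj Rlt_0_1 (Rle_refl 1)); nra.
  set t := Rmin 1 (- dl / nsq (vsub z p)).
  have Ht1 : t <= - dl / nsq (vsub z p) by apply Rmin_r.
  have Ht0 : 0 < t.
    apply Rmin_pos; first lra.
    apply Rdiv_lt_0_compat; lra.
  have := Hineq t (conj Ht0 (Rmin_l _ _)).
  have : t * nsq (vsub z p) <= - dl.
    have E : (- dl / nsq (vsub z p)) * nsq (vsub z p) = - dl by field; lra.
    rewrite -[X in _ <= X]E; apply Rmult_le_compat_r; lra.
  lra.
have -> : vsub y z = vadd (vsub y p) (vsub p z).
  apply: functional_extensionality => j; rewrite /vsub /vadd; ring.
rewrite nsq_add.
have -> : dot (vsub y p) (vsub p z) = dl.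
  rewrite /dl !dot_subl !dot_subr; rewrite ?(dot_sym p y) ?(dot_sym z y) ?(dot_sym p z) ?(dot_sym y p) ?(dot_sym y z); ring.
have := nsq_ge0 (vsub y p); lra.
Qed.

Lemma strong_convex_convex (mu : R) (F : vec n -> R) : 0 < mu -> strongly_convex mu F -> convex_fun F.
Proof.
move=> Hmu HF x y t Ht; have := HF x y t Ht.
have : 0 <= mu / 2 * t * (1 - t) * norm (vsub x y) ^ 2.
  rewrite norm_sq; have := nsq_ge0 (vsub x y).
  have : 0 <= mu / 2 * t * (1 - t) by apply Rmult_le_pos; [apply Rmult_le_pos; lra| lra].
  nra.
lra.
Qed.

Lemma finite_bound (P : nat -> R -> Prop) :
  (forall i G G', G <= G' -> P i G -> P i G') ->
  forall m, (forall i, (i < m)%nat -> exists G, P i G) ->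
  exists G, 0 <= G /\ forall i, (i < m)%nat -> P i G.
Proof.
move=> Hmon; elim=> [|m IH] H.
  exists 0; split; [lra| by []].
have [G1 [HG1 H1]] : exists G, 0 <= G /\ forall i, (i < m)%nat -> P i G.
  apply IH => i Hi; apply H; apply: ltn_trans Hi _; done.
have [G2 H2] := H m (ltnSn m).
exists (Rmax G1 G2); split; first by apply: Rle_trans HG1 (Rmax_l _ _).
move=> i; rewrite ltnS leq_eqVlt => /orP [/eqP -> | Hi].
  apply: Hmon H2; apply Rmax_r.
apply: Hmon (H1 i Hi); apply Rmax_l.
Qed.

End Proj.

Lemma lipschitz n (F : vec n -> R) (X : vec n -> Prop) x0 R0 M L :
  convex_fun F ->
  (forall x, X x -> forall j, Rabs (x j - x0 j) <= R0) ->
  (forall w, (forall j, Rabs (w j - x0 j) <= R0 + 1) -> F w <= M) ->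
  (forall y, X y -> L <= F y) ->
  forall u v, X u -> X v -> F v - F u <= (M - L) * norm (vsub v u).
Proof.
move=> HF HB HM HL u v Hu Hv.
have HuM : F u <= M by apply HM => j; have := HB u Hu j; lra.
have HLu := HL u Hu.
have Ht0 := norm_ge0 (vsub v u).
case: (Req_dec (norm (vsub v u)) 0) => Hz.
  have : nsq (vsub v u) <= 0 by rewrite -norm_sq Hz /=; lra.
  move=> /nsq0_eq E; rewrite Hz E; lra.
set t := norm (vsub v u).
have Ht : 0 < t by rewrite /t; lra.
set z := vadd v (vscale (/ t) (vsub v u)).
have Hz1 : F z <= M.
  apply HM => j; rewrite /z /vadd /vscale.
  have -> : v j + / t * vsub v u j - x0 j = (v j - x0 j) + / t * vsub v u j by ring.
  apply: Rle_trans; first apply Rabs_triang.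
  have E : Rabs (/ t * vsub v u j) = / t * Rabs (vsub v u j).
    rewrite Rabs_mult (Rabs_right (/ t)) //; left; apply Rinv_0_lt_compat; lra.
  rewrite E; have := HB v Hv j.
  have A : Rabs (vsub v u j) <= t := comp_le_norm (vsub v u) j.
  have : / t * Rabs (vsub v u j) <= / t * t.
    apply Rmult_le_compat_l => //; left; apply Rinv_0_lt_compat; lra.
  rewrite Rinv_l; lra.
have Hl : 0 <= / (1 + t) <= 1.
  have := divle1 (a := 1) (d := 1 + t); rewrite /Rdiv Rmult_1_l; move=> H; apply H; lra.
have Ev : v = comb (/ (1 + t)) u z.
  apply: functional_extensionality => j; rewrite /comb /z /vadd /vscale /vsub.
  field; lra.
have := HF u z _ Hl; rewrite -Ev => H.
have E2 : (1 - / (1 + t)) = t * / (1 + t) by field; lra.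
rewrite E2 in H.
have Hi : 0 < / (1 + t) by apply Rinv_0_lt_compat; lra.
have : t * / (1 + t) <= t.
  have : / (1 + t) <= 1 by rewrite -Rinv_1; apply Rinv_le_contravar; lra.
  nra.
have : 0 <= t * / (1 + t) by nra.
move=> A B.
have : F v - F u <= t * / (1 + t) * (F z - F u).
  have E3 : / (1 + t) * F u + t * / (1 + t) * F z - F u = t * / (1 + t) * (F z - F u).
    field; lra.
  lra.
have : t * / (1 + t) * (F z - F u) <= t * (M - L).
  case: (Rle_lt_dec (F z - F u) 0) => Hc.
    have : t * / (1 + t) * (F z - F u) <= 0.
      have : 0 <= t * / (1 + t) by [].
      nra.
    have : 0 <= t * (M - L) by apply Rmult_le_pos; lra.
    lra.
  apply Rmult_le_compat; lra.
lra.
Qed.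

Lemma Rpower_ge1 (k : nat) (c : R) : 0 <= c -> 1 <= Rpower (INR (k + 1)) c.
Proof.
move=> Hc; rewrite -(Rpower_O (INR (k + 1))); last by rewrite plus_INR /=; have := pos_INR k; lra.
apply Rle_Rpower => //; rewrite plus_INR /=; have := pos_INR k; lra.
Qed.

Lemma div_pow_bounds (c0 : R) (k : nat) (e : R) : 0 < c0 -> 0 <= e ->
  0 < c0 / Rpower (INR (k + 1)) e <= c0.
Proof.
move=> Hc He; have H1 := Rpower_ge1 k He; split.
  apply Rdiv_lt_0_compat; lra.
have Hi : / Rpower (INR (k + 1)) e <= 1.
  rewrite -Rinv_1; apply Rinv_le_contravar; lra.
rewrite /Rdiv; have : 0 < / Rpower (INR (k + 1)) e by apply Rinv_0_lt_compat; lra.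
nra.
Qed.

Section Main.
Variables (n m : nat) (X : vec n -> Prop) (fs : nat -> vec n -> R) (h : vec n -> R)
  (a b gamma0 lambda0 : R) (x : nat -> nat -> vec n) (gf gh : nat -> nat -> vec n).
Hypothesis Hm : (0 < m)%nat.
Hypothesis HXc : convex_set X.
Hypothesis HC : compact_set X.
Hypothesis Hfs : forall i, (i < m)%nat -> convex_fun (fs i).
Hypothesis Hhc : convex_fun h.
Hypothesis Ha : 0 < a.
Hypothesis Hb : 0 < b.
Hypothesis Hg0 : 0 < gamma0.
Hypothesis Hl0 : 0 < lambda0.
Hypothesis HX0 : X (x 0%nat 0%nat).
Hypothesis Hrec : forall k, x (S k) 0%nat = x k m.
Hypothesis Hstep : forall k i, (i < m)%nat ->
     subgrad (fs i) (x k i) (gf k i) /\ subgrad h (x k i) (gh k i) /\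
     is_proj X
       (vsub (x k i)
          (vscale (gamma0 / Rpower (INR (k + 1)) a)
             (vadd (gf k i)
                (vscale ((lambda0 / Rpower (INR (k + 1)) b) / INR m) (gh k i)))))
       (x k (S i)).

Definition gam k := gamma0 / Rpower (INR (k + 1)) a.
Definition lam k := lambda0 / Rpower (INR (k + 1)) b.

Lemma gam_b k : 0 < gam k <= gamma0.
Proof. apply div_pow_bounds; lra. Qed.
Lemma lam_b k : 0 < lam k <= lambda0.
Proof. apply div_pow_bounds; lra. Qed.

Lemma iter_in_X k i : (i <= m)%nat -> X (x k i).
Proof.
elim: k i => [|k IHk] i.
  elim: i => [|i IH] Hi //.
  have [_ [_ [Hp _]]] := Hstep 0 Hi; exact Hp.
elim: i => [|i IH] Hi.
  rewrite Hrec; apply IHk; apply leqnn.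
have [_ [_ [Hp _]]] := Hstep (S k) Hi; exact Hp.
Qed.

Lemma iter0_in_X k : X (x k 0%nat).
Proof. by apply iter_in_X. Qed.

Lemma INRm_pos : 0 < INR m.
Proof. apply lt_0_INR; apply/ltP; exact Hm. Qed.

Lemma bounds : exists RR D G, 0 < RR /\ 0 <= D /\ 0 <= G /\
  (forall u, X u -> forall j, Rabs (u j - x 0%nat 0%nat j) <= RR) /\
  (forall u v, X u -> X v -> nsq (vsub u v) <= D) /\
  (forall k i, (i < m)%nat -> nsq (gf k i) <= G /\ nsq (gh k i) <= G) /\
  (forall i u v, (i < m)%nat -> X u -> X v -> fs i v - fs i u <= G * norm (vsub v u)) /\
  (forall u v, X u -> X v -> h v - h u <= G * norm (vsub v u)).
Proof.
have [RR [HR0 HB]] := X_bounded HC HX0.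
set D := INR n * (2 * RR) ^ 2.
have HD : forall u v, X u -> X v -> nsq (vsub u v) <= D.
  move=> u v Hu Hv; apply nsq_le_box => j; rewrite /vsub.
  have := HB u Hu j; have := HB v Hv j.
  have := Rabs_triang (u j - x 0%nat 0%nat j) (- (v j - x 0%nat 0%nat j)).
  rewrite Rabs_Ropp.
  have -> : u j - x 0%nat 0%nat j + - (v j - x 0%nat 0%nat j) = u j - v j by ring.
  lra.
have HR1 : 0 < RR + 1 by lra.
set P := fun (F : vec n -> R) G =>
   (forall xx gg, X xx -> subgrad F xx gg -> nsq gg <= G) /\
   (forall u v, X u -> X v -> F v - F u <= G * norm (vsub v u)).
have Pmon : forall F G G', G <= G' -> P F G -> P F G'.
  move=> F G G' HG [H1 H2]; split.
    move=> xx gg Hx Hg; apply: Rle_trans (H1 xx gg Hx Hg) HG.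
  move=> u v Hu Hv; apply: Rle_trans (H2 u v Hu Hv) _.
  apply Rmult_le_compat_r => //; apply norm_ge0.
have Hgen : forall F x0 g0, convex_fun F -> X x0 -> subgrad F x0 g0 ->
    exists G, P F G.
  move=> F x0 g0 HF Hx0 Hsg.
  have [M HM] := box_bound_full HF HR1 (x 0%nat 0%nat).
  have [L HL] := lower_bound (D := D) Hsg (fun y Hy => HD y x0 Hy Hx0).
  exists (Rmax ((M - L)^2) (M - L)); split.
    move=> xx gg Hxx Hgg; apply: Rle_trans (Rmax_l _ _).
    apply: (subgrad_bound HB HM HL Hxx Hgg).
  move=> u v Hu Hv; apply: Rle_trans; first apply: (lipschitz HF HB HM HL Hu Hv).
  apply Rmult_le_compat_r; [apply norm_ge0| apply Rmax_r].
have [Gf [HGf0 HGf]] : exists G, 0 <= G /\ forall i, (i < m)%nat ->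
    (forall k, nsq (gf k i) <= G) /\ P (fs i) G.
  apply: (finite_bound (P := fun i G => (forall k, nsq (gf k i) <= G) /\ P (fs i) G)).
    move=> i G G' HG [H1 H2]; split; last by apply: Pmon H2.
    move=> k; apply: Rle_trans (H1 k) HG.
  move=> i Hi.
  have [Hs _] := Hstep 0 Hi.
  have [G HG] := Hgen (fs i) (x 0%nat i) (gf 0%nat i) (Hfs Hi) (iter_in_X 0 (ltnW Hi)) Hs.
  exists G; split=> //.
  move=> k; have [Hs1 _] := Hstep k Hi; case: HG => [HG _].
  apply: HG Hs1; apply iter_in_X; apply ltnW; exact Hi.
have [Gh HGh] := Hgen h (x 0%nat 0%nat) (gh 0%nat 0%nat) Hhc HX0 (proj1 (proj2 (Hstep 0 Hm))).
have HGh' := Pmon _ _ (Rmax Gf Gh) (Rmax_r _ _) HGh.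
case: HGh' => [HGh1 HGh2].
exists RR; exists D; exists (Rmax Gf Gh); split=> //; split.
  rewrite /D; apply Rmult_le_pos; [apply pos_INR| apply pow2_ge_0].
split; first by apply: Rle_trans HGf0 (Rmax_l _ _).
split=> //; split=> //; split; last split => //.
  move=> k i Hi; split.
    apply: Rle_trans (Rmax_l _ _); by apply (proj1 (HGf i Hi)).
  apply: HGh1.
  - apply iter_in_X; apply ltnW; exact Hi.
  - exact (proj1 (proj2 (Hstep k Hi))).
move=> i u v Hi Hu Hv.
have [_ HP] := HGf i Hi.
have := Pmon _ _ (Rmax Gf Gh) (Rmax_l _ _) HP.
case=> [_ H2]; by apply H2.
Qed.

Lemma Sum_minus f g N : Sum (fun k => f k - g k) N = Sum f N - Sum g N.
Proof. elim: N => [|N IH]; rewrite ?Sum_0 ?Sum_S ?IH; ring. Qed.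

Lemma key : exists C, 0 <= C /\ forall k y, X y ->
  nsq (vsub (x (S k) 0%nat) y) <= nsq (vsub (x k 0%nat) y)
     - 2 * gam k * (fsum m fs (x k 0%nat) - fsum m fs y)
     - 2 * gam k * lam k * (h (x k 0%nat) - h y) + C * gam k ^ 2.
Proof.
have [RR [D [G [HR [HD0 [HG [HB [HD [HGb [HLf HLh]]]]]]]]]] := bounds.
have Hmpos := INRm_pos.
set c0 := lambda0 / INR m.
have Hc0 : 0 < c0 by apply Rdiv_lt_0_compat.
set E0 := 2 * G + 2 * (c0 ^ 2 * G).
have HE0 : 0 <= E0 by rewrite /E0; have := pow2_ge_0 c0; nra.
set C1 := E0 + (1 + c0) * (G ^ 2 + INR m ^ 2 * E0).
have HC1 : 0 <= C1.
  rewrite /C1; have := Rmult_le_pos _ _ (pow2_ge_0 (INR m)) HE0.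
  move=> H1; have : 0 <= (1 + c0) * (G ^ 2 + INR m ^ 2 * E0) by apply Rmult_le_pos; have := pow2_ge_0 G; lra.
  lra.
exists (INR m * C1); split; first nra.
move=> k y Hy.
set g := gam k.
have [Hg Hgle] : 0 < g <= gamma0 := gam_b k.
set c := lam k / INR m.
have [Hl Hlle] := lam_b k.
have Hc : 0 < c by apply Rdiv_lt_0_compat.
have Hcle : c <= c0.
  rewrite /c /c0 /Rdiv; apply Rmult_le_compat_r => //; left; apply Rinv_0_lt_compat; lra.
pose d i := vscale g (vadd (gf k i) (vscale c (gh k i))).
have Hd : forall i, (i < m)%nat -> nsq (d i) <= g ^ 2 * E0.
  move=> i Hi; rewrite /d nsq_scale; apply Rmult_le_compat_l; first by apply pow2_ge_0.
  have [H1 H2] := HGb k i Hi.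
  have := nsq_add_le (gf k i) (vscale c (gh k i)) Rlt_0_1.
  rewrite nsq_scale Rinv_1 /E0.
  have : c ^ 2 * nsq (gh k i) <= c0 ^ 2 * G.
    apply Rmult_le_compat => //; try apply pow2_ge_0; try apply nsq_ge0.
    apply pow_incr; lra.
  lra.
have Hproj : forall i, (i < m)%nat -> is_proj X (vsub (x k i) (d i)) (x k (S i)).
  move=> i Hi; have [_ [_ Hp]] := Hstep k Hi; exact Hp.
have HXi : forall i, (i <= m)%nat -> X (x k i) by move=> i Hi; apply iter_in_X.
have HA : forall i, (i <= m)%nat -> nsq (vsub (x k i) (x k 0%nat)) <= INR i ^ 2 * (g ^ 2 * E0).
  elim=> [|i IH] Hi.
    have -> : vsub (x k 0%nat) (x k 0%nat) = vscale 0 (x k 0%nat).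
      apply: functional_extensionality => j; rewrite /vsub /vscale; ring.
    rewrite nsq_scale /=; lra.
  have Hs : nsq (vsub (x k (S i)) (x k i)) <= g ^ 2 * E0.
    apply: Rle_trans; first apply: (proj_nonexp HXc (Hproj i Hi) (HXi i (ltnW Hi))).
    have -> : vsub (vsub (x k i) (d i)) (x k i) = vscale (-1) (d i).
      apply: functional_extensionality => j; rewrite /vsub /vscale; ring.
    rewrite nsq_scale /=; have := Hd i Hi; lra.
  have IH' := IH (ltnW Hi).
  case: (posnP i) => Hi0.
    subst i; have -> : INR 1 ^ 2 = 1 by simpl; ring.
    lra.
  have Hip : 0 < INR i by apply lt_0_INR; apply/ltP.
  have -> : vsub (x k (S i)) (x k 0%nat) = vadd (vsub (x k (S i)) (x k i)) (vsub (x k i) (x k 0%nat)).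
    apply: functional_extensionality => j; rewrite /vsub /vadd; ring.
  apply: Rle_trans; first apply (nsq_add_le _ _ Hip).
  have Hge : 0 <= g ^ 2 * E0 by have := pow2_ge_0 g; nra.
  have T1 : (1 + INR i) * nsq (vsub (x k (S i)) (x k i)) <= (1 + INR i) * (g ^ 2 * E0).
    apply Rmult_le_compat_l; lra.
  have T2 : (1 + / INR i) * nsq (vsub (x k i) (x k 0%nat)) <= (1 + / INR i) * (INR i ^ 2 * (g ^ 2 * E0)).
    apply Rmult_le_compat_l => //; have := Rinv_0_lt_compat _ Hip; lra.
  have E : (1 + INR i) * (g ^ 2 * E0) + (1 + / INR i) * (INR i ^ 2 * (g ^ 2 * E0))
         = INR (S i) ^ 2 * (g ^ 2 * E0) by rewrite S_INR; field; lra.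
  lra.
have Hlow : forall (F : vec n -> R) i, (i <= m)%nat ->
    (forall u v, X u -> X v -> F v - F u <= G * norm (vsub v u)) ->
    F (x k i) >= F (x k 0%nat) - (g * G ^ 2 + INR m ^ 2 * (g * E0)) / 2.
  move=> F i Hi HF.
  have L := HF (x k i) (x k 0%nat) (HXi i Hi) (HXi 0%nat (leq0n m)).
  set t := norm (vsub (x k 0%nat) (x k i)) in L.
  have Ht0 : 0 <= t by apply norm_ge0.
  have Him : INR i ^ 2 <= INR m ^ 2.
    apply pow_incr; split; [apply pos_INR| apply le_INR; apply/leP; exact Hi].
  have Ht2 : t ^ 2 <= INR m ^ 2 * (g ^ 2 * E0).
    rewrite /t norm_sq nsq_sub_sym; apply: Rle_trans (HA i Hi) _.
    apply Rmult_le_compat_r => //; have := pow2_ge_0 g; nra.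
  have : 2 * G * t <= g * G ^ 2 + INR m ^ 2 * (g * E0).
    apply: (Rmult_le_reg_l g) => //.
    have := pow2_ge_0 (g * G - t).
    have E : g * (g * G ^ 2 + INR m ^ 2 * (g * E0)) = g ^ 2 * G ^ 2 + INR m ^ 2 * (g ^ 2 * E0) by ring.
    rewrite E; simpl in Ht2 |- *; nra.
  lra.
have HBi : forall i, (i <= m)%nat ->
   nsq (vsub (x k i) y) <= nsq (vsub (x k 0%nat) y)
     - 2 * g * Sum (fun j => fs j (x k 0%nat) - fs j y) i
     - 2 * g * c * INR i * (h (x k 0%nat) - h y) + INR i * (g ^ 2 * C1).
  elim=> [|i IH] Hi.
    rewrite Sum_0 /=; lra.
  have IH' := IH (ltnW Hi).
  have [Hsf [Hsh _]] := Hstep k Hi.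
  have [HGf HGh] := HGb k i Hi.
  have P1 := proj_nonexp HXc (Hproj i Hi) Hy.
  have Ev : vsub (vsub (x k i) (d i)) y = vsub (vsub (x k i) y) (d i).
    apply: functional_extensionality => j; rewrite /vsub; ring.
  rewrite Ev (nsq_sub (vsub (x k i) y) (d i)) in P1.
  set A := vsub (x k i) y in P1.
  have Edot : dot A (d i) = g * (dot A (gf k i) + c * dot A (gh k i)).
    by rewrite /d dot_scaler dot_addr dot_scaler.
  have Sf := Hsf y; have Sh := Hsh y.
  have Ef : dot (gf k i) (vsub y (x k i)) = - dot A (gf k i).
    rewrite /A dot_subr dot_subl (dot_sym (gf k i) y) (dot_sym (gf k i) (x k i)); ring.
  have Eh : dot (gh k i) (vsub y (x k i)) = - dot A (gh k i).
    rewrite /A dot_subr dot_subl (dot_sym (gh k i) y) (dot_sym (gh k i) (x k i)); ring.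
  rewrite Ef in Sf; rewrite Eh in Sh.
  have Lf := Hlow (fs i) i (ltnW Hi) (fun u v => HLf i u v Hi).
  have Lh := Hlow h i (ltnW Hi) HLh.
  set ee := (g * G ^ 2 + INR m ^ 2 * (g * E0)) / 2 in Lf Lh.
  have Hdf : dot A (gf k i) >= fs i (x k 0%nat) - fs i y - ee by lra.
  have Hdh : dot A (gh k i) >= h (x k 0%nat) - h y - ee by lra.
  have Hnd := Hd i Hi.
  have Q1 : g * dot A (gf k i) >= g * (fs i (x k 0%nat) - fs i y - ee).
    apply Rle_ge; apply Rmult_le_compat_l; lra.
  have Q2 : g * c * dot A (gh k i) >= g * c * (h (x k 0%nat) - h y - ee).
    apply Rle_ge; apply Rmult_le_compat_l; [nra|lra].
  have Hee : 2 * g * ee + 2 * g * c * ee + g ^ 2 * E0 <= g ^ 2 * C1.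
    set Q := G ^ 2 + INR m ^ 2 * E0.
    have HQ : 0 <= Q by rewrite /Q; have := pow2_ge_0 G; have := Rmult_le_pos _ _ (pow2_ge_0 (INR m)) HE0; lra.
    have E1 : 2 * g * ee = g ^ 2 * Q by rewrite /ee /Q; field.
    have E2 : 2 * g * c * ee = g ^ 2 * c * Q by rewrite /ee /Q; field.
    have : g ^ 2 * c * Q <= g ^ 2 * c0 * Q.
      apply Rmult_le_compat_r => //; apply Rmult_le_compat_l; [apply pow2_ge_0| lra].
    have EC : g ^ 2 * C1 = g ^ 2 * E0 + g ^ 2 * Q + g ^ 2 * c0 * Q by rewrite /C1 /Q; ring.
    lra.
  rewrite Sum_S S_INR.
  rewrite Edot in P1.
  have EA : nsq A = nsq (vsub (x k i) y) by [].
  lra.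
have HBm := HBi m (leqnn m).
rewrite -Hrec in HBm.
have Ef : Sum (fun j => fs j (x k 0%nat) - fs j y) m = fsum m fs (x k 0%nat) - fsum m fs y.
  by rewrite Sum_minus.
rewrite Ef in HBm.
have Ec : 2 * g * c * INR m = 2 * g * lam k by rewrite /c; field; lra.
rewrite Ec in HBm.
have Ec2 : INR m * (g ^ 2 * C1) = INR m * C1 * g ^ 2 by ring.
rewrite Ec2 in HBm.
exact HBm.
Qed.

End Main.

Definition LL (k : nat) := ln (INR (k + 1)).

Lemma INR_k1_pos k : 0 < INR (k + 1).
Proof. rewrite plus_INR /=; have := pos_INR k; lra. Qed.

Lemma LL_ge0 k : 0 <= LL k.
Proof.
rewrite /LL -ln_1; case: (Req_dec (INR (k + 1)) 1) => E.
  rewrite E; lra.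
left; apply ln_increasing; first lra.
have : 1 <= INR (k + 1) by rewrite plus_INR /=; have := pos_INR k; lra.
lra.
Qed.

Lemma LL_mono k k' : (k <= k')%nat -> LL k <= LL k'.
Proof.
move=> H; rewrite /LL; case: (Req_dec (INR (k + 1)) (INR (k' + 1))) => E.
  rewrite E; lra.
left; apply ln_increasing; first apply INR_k1_pos.
have : INR (k + 1) <= INR (k' + 1) by apply le_INR; apply/leP; rewrite leq_add2r.
lra.
Qed.

Lemma exp_LL k : exp (LL k) = INR (k + 1).
Proof. rewrite /LL exp_ln //; apply INR_k1_pos. Qed.

Lemma LL_unbounded A : exists N0, forall N, (N0 <= N)%nat -> A <= LL N.
Proof.
have [N0 HN0] := INR_archimed 1 (exp A) Rlt_0_1.
exists N0 => N HN; rewrite /LL -(ln_exp A).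
have : INR N0 <= INR N by apply le_INR; apply/leP.
rewrite plus_INR /= => H.
have := exp_pos A; move=> He.
case: (Req_dec (exp A) (INR N + 1)) => E; first by rewrite E; lra.
left; apply ln_increasing => //; lra.
Qed.

Lemma exp_LL_to0 q e : q < 0 -> 0 < e -> exists N0, forall N, (N0 <= N)%nat -> exp (q * LL N) <= e.
Proof.
move=> Hq He; have [N0 HN] := LL_unbounded (ln e / q).
exists N0 => N HNN; have H := HN N HNN.
rewrite -(exp_ln e He).
have : q * LL N <= ln e.
  have E : ln e = q * (ln e / q) by field; lra.
  rewrite [X in _ <= X]E; apply Rmult_le_compat_neg_l; lra.
move=> H2; case: (Req_dec (q * LL N) (ln e)) => E; first by rewrite E; lra.
left; apply exp_increasing; lra.
Qed.

Lemma harmonic N : ln (INR (N + 1)) <= Sum (fun k => / INR (k + 1)) N.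
Proof.
elim: N => [|N IH].
  rewrite Sum_0 /= ln_1; lra.
rewrite Sum_S.
have H1 := INR_k1_pos N.
have E : INR (N.+1 + 1) = INR (N + 1) * (1 + / INR (N + 1)).
  rewrite !plus_INR S_INR /=; field; rewrite plus_INR /= in H1; lra.
rewrite E ln_mult //; last first.
  have := Rinv_0_lt_compat _ H1; lra.
have : ln (1 + / INR (N + 1)) <= / INR (N + 1).
  have Hi := Rinv_0_lt_compat _ H1.
  rewrite -{2}(ln_exp (/ INR (N + 1))).
  left; apply ln_increasing; first lra.
  apply exp_ineq1; lra.
lra.
Qed.

Lemma abel (c u : nat -> R) D : (forall k, 0 <= c k) -> (forall k, c k <= c (S k)) ->
  (forall k, 0 <= u k <= D) -> forall N,
  Sum (fun k => c k * (u k - u (S k))) (S N) <= c N * D.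
Proof.
move=> Hc Hm Hu N.
suff : Sum (fun k => c k * (u k - u (S k))) (S N) <= c N * D - c N * u (S N).
  have := Hc N; have := Hu (S N); nra.
elim: N => [|N IH].
  rewrite Sum_S Sum_0; have := Hc 0%nat; have := Hu 0%nat; nra.
rewrite Sum_S.
have := Hm N; have := Hc N; have := Hu (S N); have := Hu (S (S N)).
nra.
Qed.

Lemma Sum_trunc (t : nat -> R) K M :
  Sum (fun k => if (k < K)%nat then t k else 0) M = Sum t (minn M K).
Proof.
elim: M => [|M IH]; first by rewrite Sum_0 min0n Sum_0.
rewrite Sum_S IH /=.
have [H|H] := boolP (M < K)%nat.
  rewrite (minn_idPl (ltnW H)) (minn_idPl H) Sum_S //.
rewrite -leqNgt in H.
rewrite (minn_idPr H) (minn_idPr (leqW H)); ring.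
Qed.

Lemma Sum_mono_N (t : nat -> R) M K : (forall k, 0 <= t k) -> (M <= K)%nat -> Sum t M <= Sum t K.
Proof.
move=> Ht; elim: K => [|K IH] H.
  by move: H; rewrite leqn0 => /eqP ->; lra.
rewrite Sum_S; case: (ltnP M (S K)) => H'.
  have := IH H'; have := Ht K; lra.
have -> : M = S K by apply/eqP; rewrite eqn_leq H H'.
rewrite Sum_S; lra.
Qed.

Lemma cesaro (w eps : nat -> R) :
  (forall k, 0 < w k) -> (forall k, 0 <= eps k) ->
  (forall A, exists N0, forall N, (N0 <= N)%nat -> A <= Sum w (S N)) ->
  (forall e, 0 < e -> exists K, forall k, (K <= k)%nat -> eps k <= e) ->
  forall e, 0 < e -> exists N0, forall N, (N0 <= N)%nat ->
    Sum (fun k => w k * eps k) (S N) <= e * Sum w (S N).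
Proof.
move=> Hw He Hinf Heps e Hep.
have [K HK] := Heps (e / 2) ltac:(lra).
set A := Sum (fun k => w k * eps k) K.
have HA : 0 <= A by apply Sum_ge0 => k _; have := Hw k; have := He k; nra.
have [N0 HN0] := Hinf (2 * A / e).
exists N0 => N HN.
have H1 : Sum (fun k => w k * eps k) (S N) <=
  Sum (fun k => (if (k < K)%nat then w k * eps k else 0) + e / 2 * w k) (S N).
  apply Sum_le => k _; case: (ltnP k K) => Hk.
    have := Hw k; nra.
  have := HK k Hk; have := Hw k; nra.
rewrite Sum_plus Sum_trunc Sum_scale in H1.
have H2 : Sum (fun k => w k * eps k) (minn (S N) K) <= A.
  apply Sum_mono_N; first by move=> k; have := Hw k; have := He k; nra.
  apply geq_minr.
have H3 := HN0 N HN.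
have : 2 * A <= e * Sum w (S N).
  have E : 2 * A = e * (2 * A / e) by field; lra.
  rewrite E; apply Rmult_le_compat_l; lra.
lra.
Qed.

Ltac nz := repeat (match goal with
 | |- _ /\ _ => split
 | |- exp _ <> 0 => apply Rgt_not_eq, exp_pos
 | |- _ * _ <> 0 => apply Rmult_integral_contrapositive_currified
 | |- _ <> 0 => apply Rgt_not_eq; lra end).

Lemma Sum_shift f N : Sum f (S N) = f 0%nat + Sum (fun k => f (S k)) N.
Proof.
elim: N => [|N IH]; first by rewrite Sum_S !Sum_0; ring.
rewrite Sum_S IH Sum_S; ring.
Qed.

Lemma Sum_reflect f N : Sum f (S N) = Sum (fun k => f (N - k)%nat) (S N).
Proof.
elim: N f => [|N IH] f; first by rewrite !Sum_S !Sum_0 /=.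
rewrite (Sum_shift (fun k => f (N.+1 - k)%nat)) subn0.
have -> : Sum (fun k => f (N.+1 - k.+1)%nat) N.+1 = Sum (fun k => f (N - k)%nat) N.+1.
  by apply Sum_ext => k _; rewrite subSS.
rewrite -IH Sum_S; ring.
Qed.

Lemma Sum_const c M : Sum (fun _ => c) M = INR M * c.
Proof. elim: M => [|M IH]; rewrite ?Sum_0 ?Sum_S ?IH ?S_INR /=; ring. Qed.

Lemma Rp_LL k q : Rpower (INR (k + 1)) q = exp (q * LL k).
Proof. by rewrite /Rpower /LL. Qed.

Section Asym.
Variables (a b gamma0 lambda0 r : R).
Hypothesis Ha : 0 < a.
Hypothesis Hb : 0 < b.
Hypothesis Hg0 : 0 < gamma0.
Hypothesis Hl0 : 0 < lambda0.
Hypothesis Hr : r < 1.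
Hypothesis Hab : a + b < 1.
Hypothesis Hab2 : a > b.
Hypothesis Har : a * r <= 1.

Definition W0 := exp (r * ln gamma0).
Definition ww k := Rpower (gam a gamma0 k) r.

Lemma W0_pos : 0 < W0.
Proof. apply exp_pos. Qed.

Lemma gam_eq k : gam a gamma0 k = gamma0 * exp (- a * LL k).
Proof.
rewrite /gam Rp_LL /Rdiv; have -> : - a * LL k = - (a * LL k) by ring.
by rewrite exp_Ropp.
Qed.

Lemma lam_eq k : lam b lambda0 k = lambda0 * exp (- b * LL k).
Proof.
rewrite /lam Rp_LL /Rdiv; have -> : - b * LL k = - (b * LL k) by ring.
by rewrite exp_Ropp.
Qed.

Lemma ww_eq k : ww k = W0 * exp (- (a * r) * LL k).
Proof.
rewrite /ww /W0 gam_eq /Rpower ln_mult //; last by apply exp_pos.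
rewrite ln_exp -exp_plus; f_equal; ring.
Qed.

Lemma ww_pos k : 0 < ww k.
Proof. rewrite ww_eq; have := W0_pos; have := exp_pos (- (a * r) * LL k); nra. Qed.

Lemma ww_harm k : W0 * / INR (k + 1) <= ww k.
Proof.
rewrite ww_eq -exp_LL -exp_Ropp.
apply Rmult_le_compat_l; first by left; apply W0_pos.
have := LL_ge0 k => H.
case: (Req_dec (- LL k) (- (a * r) * LL k)) => E; first by rewrite E; lra.
left; apply exp_increasing; nra.
Qed.

Lemma Sww_inf : forall A, exists N0, forall N, (N0 <= N)%nat -> A <= Sum ww (S N).
Proof.
move=> A; have [N0 HN0] := LL_unbounded (A / W0).
exists N0 => N HN.
have H1 : W0 * Sum (fun k => / INR (k + 1)) (S N) <= Sum ww (S N).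
  rewrite -Sum_scale; apply Sum_le => k _; apply ww_harm.
have H2 : LL (S N) <= Sum (fun k => / INR (k + 1)) (S N) := harmonic (S N).
have H3 : A / W0 <= LL (S N).
  apply HN0; apply: leq_trans HN _; apply leqnSn.
have HW := W0_pos.
have : A / W0 * W0 <= LL (S N) * W0 by apply Rmult_le_compat_r; lra.
have -> : A / W0 * W0 = A by field; lra.
have : LL (S N) * W0 <= Sum (fun k => / INR (k + 1)) (S N) * W0 by apply Rmult_le_compat_r; lra.
lra.
Qed.

Lemma ww_lower : exists K0, 0 < K0 /\ forall N, INR (N + 1) * ww N <= K0 * Sum ww (S N).
Proof.
case: (Rle_lt_dec 0 r) => Hr0.
  exists 1; split; first lra.
  move=> N; rewrite Rmult_1_l.
  have -> : INR (N + 1) * ww N = Sum (fun _ => ww N) (S N) by rewrite Sum_const addn1.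
  apply Sum_le => k Hk; rewrite !ww_eq.
  apply Rmult_le_compat_l; first by left; apply W0_pos.
  have := LL_mono (k := k) (k' := N) Hk.
  have : 0 <= a * r by nra.
  move=> ? ?; case: (Req_dec (- (a * r) * LL N) (- (a * r) * LL k)) => E; first by rewrite E; lra.
  left; apply exp_increasing; nra.
set K1 := exp (- (a * r) * ln 2).
have HK1 : 0 < K1 by apply exp_pos.
exists (2 * K1); split; first lra.
move=> N.
set hN := (N %/ 2)%nat.
have Hmono : forall k k', (k <= k')%nat -> ww k <= ww k'.
  move=> k k' Hk; rewrite !ww_eq; apply Rmult_le_compat_l; first by left; apply W0_pos.
  have := LL_mono Hk; have : 0 < - (a * r) by nra.
  move=> ? ?; case: (Req_dec (- (a * r) * LL k) (- (a * r) * LL k')) => E; first by rewrite E; lra.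
  left; apply exp_increasing; nra.
have H2 : INR (N + 1) * ww hN <= 2 * Sum ww (S N).
  have -> : 2 * Sum ww (S N) = Sum (fun k => ww k + ww (N - k)%nat) (S N).
    rewrite Sum_plus -Sum_reflect; ring.
  have -> : INR (N + 1) * ww hN = Sum (fun _ => ww hN) (S N) by rewrite Sum_const addn1.
  apply Sum_le => k Hk.
  have := ww_pos k; have := ww_pos (N - k)%nat.
  case: (leqP hN k) => Hk2.
    have := Hmono _ _ Hk2; lra.
  have : (hN <= N - k)%nat by rewrite /hN in Hk2 *; lia.
  move=> /Hmono; lra.
have H3 : ww N <= K1 * ww hN.
  rewrite !ww_eq /K1.
  have E : exp (- (a * r) * ln 2) * (W0 * exp (- (a * r) * LL hN)) =
     W0 * exp (- (a * r) * (ln 2 + LL hN)).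
    have -> : - (a * r) * (ln 2 + LL hN) = - (a * r) * ln 2 + - (a * r) * LL hN by ring.
    rewrite exp_plus; ring.
  rewrite E; apply Rmult_le_compat_l; first by left; apply W0_pos.
  have : LL N <= ln 2 + LL hN.
    rewrite /LL -ln_mult; last by apply INR_k1_pos. 2: lra.
    have : INR (N + 1) <= 2 * INR (hN + 1).
      rewrite -(mult_INR 2); apply le_INR; apply/leP.
      rewrite /hN; have := divn2 N; lia.
    move=> H; case: (Req_dec (INR (N + 1)) (2 * INR (hN + 1))) => E2; first by rewrite E2; lra.
    left; apply ln_increasing; [apply INR_k1_pos| lra].
  have : 0 < - (a * r) by nra.
  move=> ? ?; case: (Req_dec (- (a * r) * LL N) (- (a * r) * (ln 2 + LL hN))) => E3; first by rewrite E3; lra.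
  left; apply exp_increasing; nra.
have HN1 := INR_k1_pos N.
have : INR (N + 1) * ww N <= INR (N + 1) * (K1 * ww hN) by apply Rmult_le_compat_l; lra.
nra.
Qed.

Definition EV (P : nat -> R) := forall e, 0 < e -> exists N0, forall N, (N0 <= N)%nat ->
  P N <= e * Sum ww (S N).

Lemma EV_plus P Q : EV P -> EV Q -> EV (fun N => P N + Q N).
Proof.
move=> HP HQ e He.
have [N1 H1] := HP (e / 2) ltac:(lra).
have [N2 H2] := HQ (e / 2) ltac:(lra).
exists (maxn N1 N2) => N HN.
have := H1 N (leq_trans (leq_maxl _ _) HN).
have := H2 N (leq_trans (leq_maxr _ _) HN).
lra.
Qed.

Lemma EV_scale c P : 0 <= c -> EV P -> EV (fun N => c * P N).
Proof.
move=> Hc HP e He.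
have [N1 H1] := HP (e / (c + 1)) ltac:(apply Rdiv_lt_0_compat; lra).
exists N1 => N HN; have := H1 N HN.
have HS : 0 < Sum ww (S N) by apply Sum_pos; apply ww_pos.
move=> H.
have : c * P N <= c * (e / (c + 1) * Sum ww (S N)) by apply Rmult_le_compat_l.
have : c * (e / (c + 1) * Sum ww (S N)) <= e * Sum ww (S N).
  have E : c * (e / (c + 1) * Sum ww (S N)) = (c / (c + 1)) * (e * Sum ww (S N)) by field; lra.
  rewrite E.
  have : c / (c + 1) <= 1 by apply divle1; lra.
  have : 0 <= e * Sum ww (S N) by nra.
  nra.
lra.
Qed.

Lemma EV_le P Q : (forall N, P N <= Q N) -> EV Q -> EV P.
Proof.
move=> H HQ e He; have [N0 H0] := HQ e He; exists N0 => N HN.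
apply: Rle_trans (H N) (H0 N HN).
Qed.

Lemma EV_cesaro (eps : nat -> R) : (forall k, 0 <= eps k) ->
  (forall e, 0 < e -> exists K, forall k, (K <= k)%nat -> eps k <= e) ->
  EV (fun N => Sum (fun k => ww k * eps k) (S N)).
Proof.
move=> H1 H2 e He; apply: cesaro => //.
- apply ww_pos.
- apply Sww_inf.
Qed.

Lemma exp_eps (c q : R) : 0 < c -> q < 0 ->
  forall e, 0 < e -> exists K, forall k, (K <= k)%nat -> c * exp (q * LL k) <= e.
Proof.
move=> Hc Hq e He; have [K HK] := exp_LL_to0 Hq (e := e / c) ltac:(apply Rdiv_lt_0_compat; lra).
exists K => k Hk; have := HK k Hk => H.
have : c * exp (q * LL k) <= c * (e / c) by apply Rmult_le_compat_l; lra.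
have -> : c * (e / c) = e by field; lra.
done.
Qed.

Lemma EV_gam : EV (fun N => Sum (fun k => ww k * gam a gamma0 k) (S N)).
Proof.
apply EV_cesaro.
  move=> k; have [H _] := gam_b Ha Hg0 k; lra.
move=> e He; have [K HK] := exp_eps Hg0 (q := - a) ltac:(lra) He.
exists K => k Hk; rewrite gam_eq; apply HK, Hk.
Qed.

Lemma EV_lam : EV (fun N => Sum (fun k => ww k * lam b lambda0 k) (S N)).
Proof.
apply EV_cesaro.
  move=> k; have [H _] := lam_b Hb Hl0 k; lra.
move=> e He; have [K HK] := exp_eps Hl0 (q := - b) ltac:(lra) He.
exists K => k Hk; rewrite lam_eq; apply HK, Hk.
Qed.

Lemma EV_ratio : EV (fun N => Sum (fun k => ww k * (gam a gamma0 k / lam b lambda0 k)) (S N)).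
Proof.
apply EV_cesaro.
  move=> k; have [H _] := gam_b Ha Hg0 k; have [H' _] := lam_b Hb Hl0 k.
  left; apply Rdiv_lt_0_compat; lra.
move=> e He.
have Hc : 0 < gamma0 / lambda0 by apply Rdiv_lt_0_compat.
have [K HK] := exp_eps Hc (q := b - a) ltac:(lra) He.
exists K => k Hk; rewrite gam_eq lam_eq.
have E : gamma0 * exp (- a * LL k) / (lambda0 * exp (- b * LL k)) = gamma0 / lambda0 * exp ((b - a) * LL k).
  have -> : (b - a) * LL k = - a * LL k + - (- b * LL k) by ring.
  rewrite exp_plus exp_Ropp; field; nz.
rewrite E; apply HK, Hk.
Qed.

Lemma bnd_gen (p : R) (F : nat -> R) : p < 1 -> (forall N, F N = ww N * exp (p * LL N)) ->
  EV F.
Proof.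
move=> Hp HF e He.
have [K0 [HK0 HW]] := ww_lower.
have [N0 HN0] := exp_LL_to0 (q := p - 1) ltac:(lra) (e := e / K0) ltac:(apply Rdiv_lt_0_compat; lra).
exists N0 => N HN; rewrite HF.
have H1 := HN0 N HN.
have E : ww N * exp (p * LL N) = INR (N + 1) * ww N * exp ((p - 1) * LL N).
  rewrite -exp_LL; have -> : p * LL N = LL N + (p - 1) * LL N by ring.
  rewrite exp_plus; ring.
rewrite E.
have HW' := HW N.
have Hx := exp_pos ((p - 1) * LL N).
have HS : 0 < Sum ww (S N) by apply Sum_pos; apply ww_pos.
have : INR (N + 1) * ww N * exp ((p - 1) * LL N) <= K0 * Sum ww (S N) * exp ((p - 1) * LL N).
  apply Rmult_le_compat_r; lra.
have : K0 * Sum ww (S N) * exp ((p - 1) * LL N) <= K0 * Sum ww (S N) * (e / K0).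
  apply Rmult_le_compat_l; nra.
have -> : K0 * Sum ww (S N) * (e / K0) = e * Sum ww (S N) by field; lra.
lra.
Qed.

Lemma EV_bnd1 : EV (fun N => ww N / gam a gamma0 N).
Proof.
apply (EV_le (Q := fun N => / gamma0 * (ww N * exp (a * LL N)))).
  move=> N; right; rewrite gam_eq.
  have -> : a * LL N = - (- a * LL N) by ring.
  rewrite exp_Ropp; field; nz.
apply EV_scale; first by left; apply Rinv_0_lt_compat.
apply (bnd_gen (p := a)) => //; lra.
Qed.

Lemma EV_bnd2 : EV (fun N => ww N / (gam a gamma0 N * lam b lambda0 N)).
Proof.
apply (EV_le (Q := fun N => / (gamma0 * lambda0) * (ww N * exp ((a + b) * LL N)))).
  move=> N; right; rewrite gam_eq lam_eq.
  have -> : (a + b) * LL N = - (- a * LL N) + - (- b * LL N) by ring.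
  rewrite exp_plus !exp_Ropp; field; nz.
apply EV_scale; first by left; apply Rinv_0_lt_compat; nra.
apply (bnd_gen (p := a + b)) => //.
Qed.

Lemma cmono1 k : ww k / gam a gamma0 k <= ww (S k) / gam a gamma0 (S k).
Proof.
have E : forall k, ww k / gam a gamma0 k = W0 / gamma0 * exp ((a - a * r) * LL k).
  move=> k'; rewrite ww_eq gam_eq.
  have -> : (a - a * r) * LL k' = - (a * r) * LL k' + - (- a * LL k') by ring.
  rewrite exp_plus exp_Ropp; field; nz.
rewrite !E; apply Rmult_le_compat_l.
  left; apply Rdiv_lt_0_compat => //; apply W0_pos.
have := LL_mono (leqnSn k).
have : 0 < a - a * r by nra.
move=> ? ?; case: (Req_dec ((a - a * r) * LL k) ((a - a * r) * LL (S k))) => E2; first by rewrite E2; lra.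
left; apply exp_increasing; nra.
Qed.

Lemma cmono2 k : ww k / (gam a gamma0 k * lam b lambda0 k) <= ww (S k) / (gam a gamma0 (S k) * lam b lambda0 (S k)).
Proof.
have E : forall k, ww k / (gam a gamma0 k * lam b lambda0 k) = W0 / (gamma0 * lambda0) * exp ((a + b - a * r) * LL k).
  move=> k'; rewrite ww_eq gam_eq lam_eq.
  have -> : (a + b - a * r) * LL k' = - (a * r) * LL k' + (- (- a * LL k') + - (- b * LL k')) by ring.
  rewrite !exp_plus !exp_Ropp; field; nz.
rewrite !E; apply Rmult_le_compat_l.
  left; apply Rdiv_lt_0_compat; [apply W0_pos| nra].
have := LL_mono (leqnSn k).
have : 0 < a + b - a * r by nra.
move=> ? ?; case: (Req_dec ((a + b - a * r) * LL k) ((a + b - a * r) * LL (S k))) => E2; first by rewrite E2; lra.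
left; apply exp_increasing; nra.
Qed.

End Asym.

Lemma fsum_convex n m (fs : nat -> vec n -> R) :
  (forall i, (i < m)%nat -> convex_fun (fs i)) -> convex_fun (fsum m fs).
Proof.
move=> H x y t Ht.
rewrite /fsum -/(Sum (fun i => fs i (comb t x y)) m) -/(Sum (fun i => fs i x) m)
  -/(Sum (fun i => fs i y) m).
rewrite -!Sum_scale -Sum_plus; apply Sum_le => i Hi; by apply H.
Qed.

Lemma Sum_mulc f c N : Sum (fun k => f k * c) N = c * Sum f N.
Proof. rewrite -Sum_scale; apply Sum_ext => k _; ring. Qed.

Theorem theorem1
  (n m : nat) (X : vec n -> Prop) (fs : nat -> vec n -> R) (h : vec n -> R)
  (mu_h : R) (xh : vec n)
  (a b gamma0 lambda0 r : R)
  (x : nat -> nat -> vec n) (gf gh : nat -> nat -> vec n) :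
  (0 < m)%nat ->
  (exists z, X z) -> convex_set X -> compact_set X ->
  (forall i, (i < m)%nat -> convex_fun (fs i)) ->
  0 < mu_h -> strongly_convex mu_h h ->
  (* xh is the minimizer of h over X* = argmin_X f *)
  argmin (fsum m fs) X xh ->
  (forall y, argmin (fsum m fs) X y -> h xh <= h y) ->
  (* parameters *)
  0 < a -> 0 < b -> 0 < gamma0 -> 0 < lambda0 ->
  gamma0 * lambda0 <= 2 * INR m / mu_h ->
  r < 1 ->
  a > b -> a > 1/2 -> a + b < 1 -> a * r <= 1 ->
  (* IR-IG iterates: x k i = x_{k,i}, x k 0 = x_k *)
  X (x 0%nat 0%nat) ->
  (forall k, x (S k) 0%nat = x k m) ->
  (forall k i, (i < m)%nat ->
     subgrad (fs i) (x k i) (gf k i) /\ subgrad h (x k i) (gh k i) /\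
     is_proj X
       (vsub (x k i)
          (vscale (gamma0 / Rpower (INR (k + 1)) a)
             (vadd (gf k i)
                (vscale ((lambda0 / Rpower (INR (k + 1)) b) / INR m) (gh k i)))))
       (x k (S i))) ->
  seq_conv
    (fun N => wavg (fun k => Rpower (gamma0 / Rpower (INR (k + 1)) a) r)
                   (fun k => x k 0%nat) (S N))
    xh.
Proof.
move=> Hm _ HXc HC Hfs Hmu Hsc [Hxh Hmin] Huniq Ha Hb Hg0 Hl0 _ Hr Hab2 _ Hab Har HX0 Hrec Hstep.
have Hhc := strong_convex_convex Hmu Hsc.
have HFc : convex_fun (fsum m fs) by apply fsum_convex.
have [C [HC0 Hkey]] := key Hm HXc HC Hfs Hhc Ha Hb Hg0 Hl0 HX0 Hrec Hstep.
have [RR [D [G [HR [HD0 [HG [HB [HD [HGb [HLf HLh]]]]]]]]]] := bounds Hm HC Hfs Hhc HX0 Hrec Hstep.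
have HXk : forall k, X (x k 0%nat) := iter0_in_X HX0 Hrec Hstep.
set w := ww a gamma0 r.
have Hw : forall k, 0 < w k := fun k => ww_pos a r Hg0 k.
set xs := fun k => x k 0%nat.
have HJ : forall (Q : vec n -> R), convex_fun Q -> forall N,
    X (wavg w xs (S N)) /\ Q (wavg w xs (S N)) * Sum w (S N) <= Sum (fun k => w k * Q (xs k)) (S N).
  move=> Q HQ N; apply jensen => //.
have [Lh HLh0] : exists L, forall y, X y -> L <= h y.
  have [_ [Hsg _]] := Hstep 0%nat 0%nat Hm.
  apply: (lower_bound Hsg) => y Hy; apply HD => //.
set B := h xh - Lh.
have HB0 : 0 <= B by rewrite /B; have := HLh0 xh Hxh; lra.
set g := gam a gamma0.
set l := lam b lambda0.
have Hg : forall k, 0 < g k by move=> k; have [? _] := gam_b Ha Hg0 k.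
have Hl : forall k, 0 < l k by move=> k; have [? _] := lam_b Hb Hl0 k.
set u := fun k => nsq (vsub (x k 0%nat) xh).
have Hu : forall k, 0 <= u k <= D by move=> k; split; [apply nsq_ge0| apply HD].
set Phi := fun k => fsum m fs (x k 0%nat) - fsum m fs xh.
have HPhi : forall k, 0 <= Phi k by move=> k; rewrite /Phi; have := Hmin _ (HXk k); lra.
set Psi := fun k => h (x k 0%nat) - h xh.
have HPsi : forall k, - B <= Psi k by move=> k; rewrite /Psi /B; have := HLh0 _ (HXk k); lra.
have HK : forall k, u (S k) <= u k - 2 * g k * Phi k - 2 * g k * l k * Psi k + C * g k ^ 2.
  move=> k; exact: (Hkey k xh Hxh).
have SH : forall N, Sum (fun k => w k * Psi k) (S N) <=
    / 2 * (w N / (g N * l N)) * D + C / 2 * Sum (fun k => w k * (g k / l k)) (S N).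
  move=> N.
  have T : forall k, w k * Psi k <=
      / 2 * (w k / (g k * l k)) * (u k - u (S k)) + C / 2 * (w k * (g k / l k)).
    move=> k; have := HK k; have := HPhi k; have := Hg k; have := Hl k; have := Hw k.
    move=> H1 H2 H3 H4 H5.
    set q := / 2 * (w k / (g k * l k)).
    have Hq : 0 < q by rewrite /q; apply Rmult_lt_0_compat; [lra| apply Rdiv_lt_0_compat; nra].
    have E1 : w k * Psi k = q * (2 * g k * l k * Psi k) by rewrite /q; field; lra.
    have E2 : C / 2 * (w k * (g k / l k)) = q * (C * g k ^ 2) by rewrite /q; field; lra.
    rewrite E1 E2.
    have : 2 * g k * l k * Psi k <= u k - u (S k) + C * g k ^ 2.
      have : 0 <= 2 * g k * Phi k by nra.
      lra.
    move=> H6; have := Rmult_le_compat_l _ _ _ (Rlt_le _ _ Hq) H6; lra.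
  apply: Rle_trans; first by apply Sum_le => k _; apply T.
  rewrite Sum_plus Sum_scale.
  have Hc1 : forall k, 0 <= / 2 * (w k / (g k * l k)).
    move=> k; apply Rmult_le_pos; first lra; left; apply Rdiv_lt_0_compat; [apply Hw| have := Hg k; have := Hl k; nra].
  have Hc2 : forall k, / 2 * (w k / (g k * l k)) <= / 2 * (w (S k) / (g (S k) * l (S k))).
    move=> k; apply Rmult_le_compat_l; first lra; apply (cmono2 Ha Hb Hg0 Hl0 Hr Hab2).
  have := abel (c := fun k => / 2 * (w k / (g k * l k))) (u := u) (D := D) Hc1 Hc2 Hu N.
  lra.
have SF : forall N, Sum (fun k => w k * Phi k) (S N) <=
    / 2 * (w N / g N) * D + B * Sum (fun k => w k * l k) (S N) + C / 2 * Sum (fun k => w k * g k) (S N).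
  move=> N.
  have T : forall k, w k * Phi k <=
      / 2 * (w k / g k) * (u k - u (S k)) + B * (w k * l k) + C / 2 * (w k * g k).
    move=> k; have := HK k; have := HPsi k; have := Hg k; have := Hl k; have := Hw k.
    move=> H1 H2 H3 H4 H5.
    set q := / 2 * (w k / g k).
    have Hq : 0 < q by rewrite /q; apply Rmult_lt_0_compat; [lra| apply Rdiv_lt_0_compat; nra].
    have E1 : w k * Phi k = q * (2 * g k * Phi k) by rewrite /q; field; lra.
    have E2 : B * (w k * l k) = q * (2 * g k * l k * B) by rewrite /q; field; lra.
    have E3 : C / 2 * (w k * g k) = q * (C * g k ^ 2) by rewrite /q; field; lra.
    rewrite E1 E2 E3.
    have : 2 * g k * Phi k <= u k - u (S k) + 2 * g k * l k * B + C * g k ^ 2.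
      have : - B * (2 * g k * l k) <= Psi k * (2 * g k * l k).
        apply Rmult_le_compat_r; [nra| lra].
      lra.
    move=> H6; have := Rmult_le_compat_l _ _ _ (Rlt_le _ _ Hq) H6; lra.
  apply: Rle_trans; first by apply Sum_le => k _; apply T.
  rewrite !Sum_plus !Sum_scale.
  have Hc1 : forall k, 0 <= / 2 * (w k / g k).
    move=> k; apply Rmult_le_pos; first lra; left; apply Rdiv_lt_0_compat; [apply Hw| apply Hg].
  have Hc2 : forall k, / 2 * (w k / g k) <= / 2 * (w (S k) / g (S k)).
    move=> k; apply Rmult_le_compat_l; first lra; apply (cmono1 Ha Hg0 Hr).
  have := abel (c := fun k => / 2 * (w k / g k)) (u := u) (D := D) Hc1 Hc2 Hu N.
  lra.
have EVF : EV a gamma0 r (fun N => / 2 * (w N / g N) * D + B * Sum (fun k => w k * l k) (S N)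
     + C / 2 * Sum (fun k => w k * g k) (S N)).
  apply: (@EV_plus a gamma0 r).
    apply: (@EV_plus a gamma0 r).
      apply: (@EV_le a gamma0 r _ (fun N => (D / 2) * (w N / g N))).
        move=> N; right; rewrite /Rdiv; ring.
      apply: (@EV_scale a b gamma0 r Hb Hg0 Hab Hab2) => //; first lra.
      exact: (@EV_bnd1 a b gamma0 r Hb Hg0 Hab Hab2 Har).
    apply: (@EV_scale a b gamma0 r Hb Hg0 Hab Hab2) => //.
    exact: (@EV_lam a b gamma0 lambda0 r Hb Hg0 Hl0 Har).
  apply: (@EV_scale a b gamma0 r Hb Hg0 Hab Hab2) => //; first lra.
  exact: (@EV_gam a gamma0 r Ha Hg0 Har).
have EVH : EV a gamma0 r (fun N => / 2 * (w N / (g N * l N)) * D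
     + C / 2 * Sum (fun k => w k * (g k / l k)) (S N)).
  apply: (@EV_plus a gamma0 r).
    apply: (@EV_le a gamma0 r _ (fun N => (D / 2) * (w N / (g N * l N)))).
      move=> N; right; rewrite /Rdiv; ring.
    apply: (@EV_scale a b gamma0 r Hb Hg0 Hab Hab2) => //; first lra.
    exact: (@EV_bnd2 a b gamma0 lambda0 r Hb Hg0 Hl0 Hab Hab2 Har).
  apply: (@EV_scale a b gamma0 r Hb Hg0 Hab Hab2) => //; first lra.
  exact: (@EV_ratio a b gamma0 lambda0 r Ha Hb Hg0 Hl0 Hab2 Har).
set xbar := fun N => wavg w xs (S N).
have HXbar : forall N, X (xbar N) by move=> N; have [H _] := HJ h Hhc N.
have H1 : forall e, 0 < e -> exists N0, forall N, (N0 <= N)%nat -> fsum m fs (xbar N) <= fsum m fs xh + e.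
  move=> e He; have [N0 HN0] := EVF e He; exists N0 => N HN.
  have [_ J] := HJ _ HFc N.
  have E : Sum (fun k => w k * Phi k) (S N) =
     Sum (fun k => w k * fsum m fs (xs k)) (S N) - fsum m fs xh * Sum w (S N).
    rewrite -Sum_mulc -Sum_minus; apply Sum_ext => k _; rewrite /Phi /xs; ring.
  have A2 := SF N; have A1 := HN0 N HN; cbv beta in A1; rewrite -/w in A1; rewrite E in A2.
  have HS : 0 < Sum w (S N) by apply Sum_pos.
  have : (fsum m fs (xbar N) - fsum m fs xh) * Sum w (S N) <= e * Sum w (S N).
    rewrite /xbar; lra.
  move=> A3; apply Rmult_le_reg_r in A3 => //; lra.
have H2 : forall e, 0 < e -> exists N0, forall N, (N0 <= N)%nat -> h (xbar N) <= h xh + e.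
  move=> e He; have [N0 HN0] := EVH e He; exists N0 => N HN.
  have [_ J] := HJ _ Hhc N.
  have E : Sum (fun k => w k * Psi k) (S N) =
     Sum (fun k => w k * h (xs k)) (S N) - h xh * Sum w (S N).
    rewrite -Sum_mulc -Sum_minus; apply Sum_ext => k _; rewrite /Psi /xs; ring.
  have A2 := SH N; have A1 := HN0 N HN; cbv beta in A1; rewrite -/w in A1; rewrite E in A2.
  have HS : 0 < Sum w (S N) by apply Sum_pos.
  have : (h (xbar N) - h xh) * Sum w (S N) <= e * Sum w (S N).
    rewrite /xbar; lra.
  move=> A3; apply Rmult_le_reg_r in A3 => //; lra.
have Hlim : forall (Q : vec n -> R), convex_fun Q -> forall (v : nat -> vec n) z,
    seq_conv v z ->
    (forall e, 0 < e -> exists N0, forall N, (N0 <= N)%nat -> Q (v N) <= Q xh + e) ->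
    Q z <= Q xh.
  move=> Q HQ v z Hcv HQv.
  have [M HM] := lsc_bound z HQ.
  apply: Rnot_lt_le => Hlt.
  set e := Q z - Q xh.
  have He : 0 < e by rewrite /e; lra.
  set d := e / (4 * (Rabs (M - Q z) + 1)).
  have Hd : 0 < d by apply Rdiv_lt_0_compat => //; have := Rabs_pos (M - Q z); lra.
  have [K1 HK1] := Hcv d Hd.
  have [N0 HN0] := HQv (e / 4) ltac:(lra).
  set k := maxn K1 N0.
  have A1 := HK1 k (leq_maxl _ _).
  have A2 := HN0 k (leq_maxr _ _).
  have A3 := HM d (v k) Hd (fun j => Rlt_le _ _ (Rle_lt_trans _ _ _ (comp_le_norm (vsub (v k) z) j) A1)).
  have A4 : d * (M - Q z) <= e / 4.
    have : d * (M - Q z) <= d * Rabs (M - Q z) by apply Rmult_le_compat_l; [lra| apply Rle_abs].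
    have : d * Rabs (M - Q z) <= e / 4.
      rewrite /d; have HA := Rabs_pos (M - Q z).
      have E : e / (4 * (Rabs (M - Q z) + 1)) * Rabs (M - Q z) = e / 4 * (Rabs (M - Q z) / (Rabs (M - Q z) + 1)) by field; lra.
      rewrite E; have : Rabs (M - Q z) / (Rabs (M - Q z) + 1) <= 1 by apply divle1; lra.
      nra.
    lra.
  have Ee : e = Q z - Q xh by [].
  lra.
apply: NNPP => Hn.
have [eps Heps] : exists eps, 0 < eps /\ forall N, exists k, (N <= k)%nat /\ eps <= norm (vsub (xbar k) xh).
  apply: NNPP => Hn2; apply Hn => eps Heps.
  apply: NNPP => Hn3; apply Hn2; exists eps; split => // N.
  apply: NNPP => Hn4; apply Hn3; exists N => k Hk.
  apply: Rnot_le_lt => Hle; apply Hn4; exists k; split => //.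
case: Heps => Heps Hex.
pose psi N := proj1_sig (constructive_indefinite_description _ (Hex N)).
have Hpsi : forall N, (N <= psi N)%nat /\ eps <= norm (vsub (xbar (psi N)) xh).
  move=> N; exact: (proj2_sig (constructive_indefinite_description _ (Hex N))).
have [phi [z [Hphi [Hz Hcv]]]] := HC (fun N => xbar (psi N)) (fun N => HXbar (psi N)).
have Hge : forall k, (k <= phi k)%nat.
  elim=> [|k IH] //; apply: leq_ltn_trans IH (Hphi k).
have Hev : forall (Q : vec n -> R),
    (forall e, 0 < e -> exists N0, forall N, (N0 <= N)%nat -> Q (xbar N) <= Q xh + e) ->
    (forall e, 0 < e -> exists N0, forall N, (N0 <= N)%nat -> Q (xbar (psi (phi N))) <= Q xh + e).
  move=> Q HQ e He; have [N0 HN0] := HQ e He; exists N0 => N HN; apply HN0.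
  apply: leq_trans HN _; apply: leq_trans (Hge N) _; exact: (proj1 (Hpsi (phi N))).
have Fz := Hlim _ HFc _ z Hcv (Hev _ H1).
have Hzh := Hlim _ Hhc _ z Hcv (Hev _ H2).
have Hzarg : argmin (fsum m fs) X z.
  split=> // y Hy; have := Hmin y Hy; lra.
have Hhz := Huniq z Hzarg.
have Hmid : X (comb (1/2) z xh) by apply HXc => //; lra.
have Hmarg : argmin (fsum m fs) X (comb (1/2) z xh).
  split=> // y Hy; have := HFc z xh (1/2) ltac:(lra); have := Hmin y Hy; lra.
have Hhm := Huniq _ Hmarg.
have := Hsc z xh (1/2) ltac:(lra); rewrite norm_sq => Hs.
have Hnz : nsq (vsub z xh) <= 0.
  have : mu_h / 2 * (1 / 2) * (1 - 1 / 2) * nsq (vsub z xh) <= 0 by lra.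
  have := nsq_ge0 (vsub z xh); nra.
have Ez := nsq0_eq Hnz.
rewrite Ez in Hcv.
have [K HK2] := Hcv eps Heps.
have := HK2 K (leqnn K); have := proj2 (Hpsi (phi K)); rewrite /xbar; lra.
Qed.
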